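(* Suppose $(\mu^{(k)},w^{(k)})$ is an exact minimizer of rQEPmin, let $y^{(k)}=(T_k-\mu^{(k)}I)w^{(k)}$ and $z^{(k)}=Q_kw^{(k)}$. Then the residual $r_k=(PAP-\mu^{(k)}I)^2z^{(k)}-\gamma^{-2}b_0b_0^{\top}z^{(k)}$ satisfies $r_k=\beta_{k+1}q_{k+1}e_k^{\top}y^{(k)}+\beta_{k+1}(PAP-\mu^{(k)}I)q_{k+1}e_k^{\top}w^{(k)}$, where $\beta_{k+1}q_{k+1}$ denotes $\widehat q_{k+1}$.
   Context: Let $A\in\mathbb{R}^{n\times n}$ be symmetric, $C\in\mathbb{R}^{n\times m}$ full column rank, $P=I-C(C^{\top}C)^{-1}C^{\top}$, $0\ne b_0\in\mathcal N(C^{\top})$, $\gamma>0$. Lanczos process with $M=PAP$: $q_0=0$, $\beta_1=\|b_0\|$, $q_1=b_0/\|b_0\|$, for $j=1,2,\dots$: $\alpha_j=q_j^{\top}Mq_j$, $\widehat q_{j+1}=Mq_j-\alpha_jq_j-\beta_jq_{j-1}$, $\beta_{j+1}=\|\widehat q_{j+1}\|$, $q_{j+1}=\widehat q_{j+1}/\beta_{j+1}$ when $\beta_{j+1}>0$; assume $\beta_j\ne0$ for $j=2,\dots,k$. $Q_k=[q_1,\dots,q_k]$, $T_k=Q_k^{\top}PAPQ_k$ (tridiagonal). rQEPmin: minimize $\lambda$ over $\lambda\in\mathbb{R}$, $0\ne w\in\mathbb{R}^k$ with $(T_k-\lambda I)^2w=\gamma^{-2}\|b_0\|^2e_1e_1^{\top}w$.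 *)

(* Defs.v *)
From HB Require Import structures.
From mathcomp Require Import all_boot all_order all_algebra.
Set Implicit Arguments. Unset Strict Implicit. Unset Printing Implicit Defensive.
Import Order.TTheory GRing.Theory Num.Theory.
Local Open Scope ring_scope.

Section Lanczos.
Variable R : rcfType.
Variable n : nat.

Definition vnorm (v : 'cV[R]_n) : R := Num.sqrt ((v^T *m v) 0 0).

Definition projP (m : nat) (C : 'M[R]_(n, m)) : 'M[R]_n :=
  1%:M - C *m invmx (C^T *m C) *m C^T.

(* Lanczos state at step j >= 1: (q_{j-1}, q_j, beta_j), for the matrix M,
   started from b0.  Convention: q_{j+1} := qhat_{j+1} / beta_{j+1}, which
   is 0 when beta_{j+1} = 0 (only used when beta_{j+1} <> 0). *)
Fixpoint lanczos_state (M : 'M[R]_n) (b0 : 'cV[R]_n) (j : nat)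
  : 'cV[R]_n * 'cV[R]_n * R :=
  match j with
  | 0%N => (0, 0, 0)
  | 1%N => (0, (vnorm b0)^-1 *: b0, vnorm b0)
  | j'.+1 =>
      let: (qp, q, b) := lanczos_state M b0 j' in
      let alpha := (q^T *m M *m q) 0 0 in
      let qh := M *m q - alpha *: q - b *: qp in
      let b' := vnorm qh in
      (q, b'^-1 *: qh, b')
  end.

Definition lq M b0 j : 'cV[R]_n := (lanczos_state M b0 j).1.2.
Definition lbeta M b0 j : R := (lanczos_state M b0 j).2.
Definition lalpha M b0 j : R := ((lq M b0 j)^T *m M *m lq M b0 j) 0 0.
Definition lqhat M b0 j : 'cV[R]_n :=
  M *m lq M b0 j - lalpha M b0 j *: lq M b0 j
    - lbeta M b0 j *: (lanczos_state M b0 j).1.1.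

Definition lQ M b0 k : 'M[R]_(n, k) := \matrix_(i < n, j < k) lq M b0 j.+1 i ord0.
End Lanczos.

(* i-th standard basis column vector of R^k (0-based index i) *)
Definition ecol (R : rcfType) (k i : nat) : 'cV[R]_k :=
  \col_(j < k) (nat_of_ord j == i)%:R.

(* feasibility for rQEPmin: (T - lam I)^2 w = gamma^-2 ||b0||^2 e1 e1^T w, w <> 0 *)
Definition rQEP_feasible (R : rcfType) (k : nat) (T : 'M[R]_k) (c : R)
  (lam : R) (w : 'cV[R]_k) : Prop :=
  w != 0 /\
  (T - lam%:M) *m (T - lam%:M) *m w = c *: (ecol R k 0 *m (ecol R k 0)^T *m w).

Definition rQEPmin_minimizer (R : rcfType) (k : nat) (T : 'M[R]_k) (c : R)
  (mu : R) (w : 'cV[R]_k) : Prop :=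
  rQEP_feasible T c mu w /\
  forall (lam : R) (w' : 'cV[R]_k), rQEP_feasible T c lam w' -> mu <= lam.

(* Main.v *)
Require Import Defs.
From HB Require Import structures.
From mathcomp Require Import all_boot all_order all_algebra.
Set Implicit Arguments. Unset Strict Implicit. Unset Printing Implicit Defensive.
Import Order.TTheory GRing.Theory Num.Theory.
Local Open Scope ring_scope.

Definition ip {R : rcfType} {n : nat} (u v : 'cV[R]_n) : R := (u^T *m v) 0 0.

Lemma ipE (R : rcfType) n (u v : 'cV[R]_n) : ip u v = \sum_r u r 0 * v r 0.
Proof. by rewrite /ip !mxE; apply: eq_bigr => r _; rewrite mxE. Qed.

Lemma ipC (R : rcfType) n (u v : 'cV[R]_n) : ip u v = ip v u.
Proof. by rewrite !ipE; apply: eq_bigr => r _; rewrite mulrC. Qed.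

Lemma ipDr (R : rcfType) n (u v w : 'cV[R]_n) : ip u (v + w) = ip u v + ip u w.
Proof. by rewrite /ip mulmxDr mxE. Qed.
Lemma ipBr (R : rcfType) n (u v w : 'cV[R]_n) : ip u (v - w) = ip u v - ip u w.
Proof. by rewrite /ip mulmxBr !mxE. Qed.
Lemma ipZr (R : rcfType) n (u v : 'cV[R]_n) c : ip u (c *: v) = c * ip u v.
Proof. by rewrite /ip -scalemxAr mxE. Qed.
Lemma ip0r (R : rcfType) n (u : 'cV[R]_n) : ip u 0 = 0.
Proof. by rewrite /ip mulmx0 mxE. Qed.
Lemma ipDl (R : rcfType) n (u v w : 'cV[R]_n) : ip (v + w) u = ip v u + ip w u.
Proof. by rewrite ipC ipDr !(ipC u). Qed.
Lemma ipBl (R : rcfType) n (u v w : 'cV[R]_n) : ip (v - w) u = ip v u - ip w u.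
Proof. by rewrite ipC ipBr !(ipC u). Qed.
Lemma ipZl (R : rcfType) n (u v : 'cV[R]_n) c : ip (c *: v) u = c * ip v u.
Proof. by rewrite ipC ipZr ipC. Qed.
Lemma ip0l (R : rcfType) n (u : 'cV[R]_n) : ip 0 u = 0.
Proof. by rewrite ipC ip0r. Qed.
Lemma ipM (R : rcfType) n (M : 'M[R]_n) (u v : 'cV[R]_n) : M^T = M ->
  ip (M *m u) v = ip u (M *m v).
Proof. by move=> hM; rewrite /ip trmx_mul hM mulmxA. Qed.
Lemma ip_ge0 (R : rcfType) n (u : 'cV[R]_n) : 0 <= ip u u.
Proof. by rewrite ipE; apply: sumr_ge0 => r _; rewrite -expr2 sqr_ge0. Qed.
Lemma ip_eq0 (R : rcfType) n (u : 'cV[R]_n) : ip u u = 0 -> u = 0.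
Proof.
rewrite ipE => /eqP; rewrite psumr_eq0 => [/allP H|r _]; last by rewrite -expr2 sqr_ge0.
apply/matrixP => i j; rewrite (ord1 j) mxE.
by have /(_ (mem_index_enum i)) := H i; rewrite implyTb -expr2 sqrf_eq0 => /eqP.
Qed.
Lemma vnorm_ip (R : rcfType) n (u : 'cV[R]_n) : vnorm u = Num.sqrt (ip u u).
Proof. by []. Qed.
Lemma vnorm_sqr (R : rcfType) n (u : 'cV[R]_n) : vnorm u ^+ 2 = ip u u.
Proof. by rewrite vnorm_ip sqr_sqrtr // ip_ge0. Qed.
Lemma unit_ip (R : rcfType) n (u : 'cV[R]_n) : vnorm u != 0 ->
  ip ((vnorm u)^-1 *: u) ((vnorm u)^-1 *: u) = 1.
Proof.
move=> h; rewrite ipZl ipZr -vnorm_sqr mulrA -expr2 -exprMn mulVf //.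
by rewrite expr1n.
Qed.
Lemma vnorm_neq0 (R : rcfType) n (u : 'cV[R]_n) : u != 0 -> vnorm u != 0.
Proof.
move=> hu; apply/negP => /eqP h.
have : ip u u = 0 by rewrite -vnorm_sqr h expr0n.
by move/ip_eq0 => h0; rewrite h0 eqxx in hu.
Qed.

Lemma state_succ (R : rcfType) n (M : 'M[R]_n) b0 j : (0 < j)%N ->
  lanczos_state M b0 j.+1 =
  (lq M b0 j, (vnorm (lqhat M b0 j))^-1 *: lqhat M b0 j, vnorm (lqhat M b0 j)).
Proof.
case: j => [//|j] _.
rewrite /lqhat /lalpha /lbeta /lq.
change (lanczos_state M b0 j.+2) with
  (let: (qp, q, b) := lanczos_state M b0 j.+1 in
      let alpha := (q^T *m M *m q) 0 0 in
      let qh := M *m q - alpha *: q - b *: qp in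
      let b' := vnorm qh in
      (q, b'^-1 *: qh, b')).
by case: (lanczos_state M b0 j.+1) => [[qp q] b].
Qed.

Lemma lq0 (R : rcfType) n (M : 'M[R]_n) b0 : lq M b0 0 = 0.
Proof. by []. Qed.
Lemma lq1 (R : rcfType) n (M : 'M[R]_n) b0 : lq M b0 1 = (vnorm b0)^-1 *: b0.
Proof. by []. Qed.
Lemma lbeta1 (R : rcfType) n (M : 'M[R]_n) b0 : lbeta M b0 1 = vnorm b0.
Proof. by []. Qed.
Lemma lqS (R : rcfType) n (M : 'M[R]_n) b0 j : (0 < j)%N ->
  lq M b0 j.+1 = (lbeta M b0 j.+1)^-1 *: lqhat M b0 j.
Proof. by move=> hj; rewrite /lq /lbeta state_succ. Qed.
Lemma lbetaS (R : rcfType) n (M : 'M[R]_n) b0 j : (0 < j)%N ->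
  lbeta M b0 j.+1 = vnorm (lqhat M b0 j).
Proof. by move=> hj; rewrite /lbeta state_succ. Qed.
Lemma lqhatE (R : rcfType) n (M : 'M[R]_n) b0 j : (0 < j)%N ->
  lqhat M b0 j = M *m lq M b0 j - lalpha M b0 j *: lq M b0 j
                 - lbeta M b0 j *: lq M b0 j.-1.
Proof.
case: j => [//|[|j]] _; first by rewrite /lqhat.
by rewrite /lqhat state_succ.
Qed.
Lemma lqhat_beta (R : rcfType) n (M : 'M[R]_n) b0 j : (0 < j)%N ->
  lbeta M b0 j.+1 != 0 -> lqhat M b0 j = lbeta M b0 j.+1 *: lq M b0 j.+1.
Proof. by move=> hj hb; rewrite lqS // scalerA mulfV // scale1r. Qed.

Definition OR (R : rcfType) n (M : 'M[R]_n) b0 j := forall i l, (i <= j)%N -> (0 < l <= j)%N ->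
  ip (lq M b0 i) (lq M b0 l) = (i == l)%:R.

Lemma lalpha_ip (R : rcfType) n (M : 'M[R]_n) b0 j :
  lalpha M b0 j = ip (lq M b0 j) (M *m lq M b0 j).
Proof. by rewrite /lalpha /ip mulmxA. Qed.

Lemma Mq_expand (R : rcfType) n (M : 'M[R]_n) b0 i : (0 < i)%N ->
  M *m lq M b0 i = lqhat M b0 i + lalpha M b0 i *: lq M b0 i + lbeta M b0 i *: lq M b0 i.-1.
Proof. by move=> hi; rewrite lqhatE // -addrA (addrC (_ *: lq M b0 i)) addrA !subrK. Qed.

Lemma qhat_orth (R : rcfType) n (M : 'M[R]_n) b0 (hM : M^T = M) j : (0 < j)%N ->
  (forall l, (2 <= l <= j)%N -> lbeta M b0 l != 0) -> OR M b0 j ->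
  forall i, (i <= j)%N -> ip (lq M b0 i) (lqhat M b0 j) = 0.
Proof.
move=> hj hb hO i hij.
case: i hij => [|i] hij; first by rewrite lq0 ip0l.
have hjm : ip (lq M b0 i.+1) (lq M b0 j.-1) = (i.+1 == j.-1)%:R.
  case: j hj hb hO hij => [//|[|j]] _ hb hO hij; first by rewrite lq0 ip0r.
  by apply: hO => //=; apply: leqW.
rewrite lqhatE // !ipBr !ipZr hjm.
case: (ltngtP i.+1 j) hij => // [hlt|hij] _; last first.
  subst j; rewrite -lalpha_ip hO ?eqxx ?leqnn //=.
  by rewrite (_ : (i.+1 == i) = false) ?mulr0 ?mulr1 ?subr0 ?subrr // ; apply/negbTE; rewrite neq_ltn ltnSn orbT.
rewrite -ipM // Mq_expand // lqhat_beta //; last by apply: hb; rewrite ltnS lt0n /= hlt.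
rewrite !ipDl !ipZl hO ?(ltnW hlt) ?leqnn ?andbT //.
have e1 : ip (lq M b0 i.+1) (lq M b0 j) = 0.
  rewrite hO ?(ltnW hlt) ?leqnn ?andbT //.
  by rewrite (_ : (i.+1 == j) = false) //; apply/negbTE; rewrite neq_ltn hlt.
have e2 : ip (lq M b0 i) (lq M b0 j) = 0.
  case: i {hjm e1} hlt => [|i] hlt; first by rewrite lq0 ip0l.
  rewrite hO ?leqnn ?andbT ?(ltnW (ltnW hlt)) //.
  by rewrite (_ : (i.+1 == j) = false) //; apply/negbTE; rewrite neq_ltn (ltnW hlt).
rewrite e1 e2 !mulr0 !addr0 subr0.
case: (eqVneq i.+2 j) => [<-|h]; first rewrite /= eqxx mulr1.
  by rewrite subrr.
have h' : (i.+1 == j.-1) = false by rewrite -eqSS prednK // (negbTE h).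
rewrite h'.
by rewrite !mulr0 subrr.
Qed.

Lemma orth (R : rcfType) n (M : 'M[R]_n) b0 (hM : M^T = M) (hb0 : b0 != 0) j :
  (forall l, (2 <= l <= j)%N -> lbeta M b0 l != 0) -> OR M b0 j.
Proof.
elim: j => [|j IH] hb i l hi hl.
  by case: l hl => [|l] //=; rewrite ltn0 andbF.
have IHj : OR M b0 j by apply: IH => l0 /andP[h1 h2]; apply: hb; rewrite h1 (leqW h2).
case: j IH hb IHj hi hl => [|j] _ hb IHj hi hl.
  case: l hl => [|[|l]] //= hl.
  case: i hi => [|[|i]] // _; first by rewrite lq0 ip0l.
  by rewrite lq1 unit_ip // vnorm_neq0.
have side : forall i, (i <= j.+1)%N -> ip (lq M b0 i) (lq M b0 j.+2) = 0.
  have hbj1 : forall l', (2 <= l' <= j.+1)%N -> lbeta M b0 l' != 0.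
    by move=> l' /andP[h1 h2]; apply: hb; rewrite h1 (leqW h2).
  move=> i' hi'; rewrite lqS // ipZr.
  by rewrite (qhat_orth hM (ltn0Sn j) hbj1 IHj hi') mulr0.
have hbj : vnorm (lqhat M b0 j.+1) != 0.
  by rewrite -lbetaS //; apply: hb; rewrite leqnn.
case/andP: hl => hl0 hl.
rewrite leq_eqVlt in hi; rewrite leq_eqVlt in hl.
case/orP: hi => [/eqP ->|hi]; case/orP: hl => [/eqP ->|hl].
- by rewrite eqxx lqS // lbetaS // unit_ip.
- rewrite ipC side //; rewrite (_ : (j.+2 == l) = false) //.
  by apply/negbTE; rewrite neq_ltn hl orbT.
- rewrite side //; rewrite (_ : (i == j.+2) = false) //.
  by apply/negbTE; rewrite neq_ltn hi.
- have hi' : (i <= j.+1)%N by rewrite -ltnS.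
  have hl' : (l <= j.+1)%N by rewrite -ltnS.
  by apply: IHj => //; rewrite hl0 hl'.
Qed.

Lemma ecol_delta (R : rcfType) k (j : 'I_k) : ecol R k j = delta_mx j 0.
Proof. by apply/matrixP => r c; rewrite !mxE (ord1 c) eqxx andbT. Qed.

Lemma lQ_e (R : rcfType) n (M : 'M[R]_n) b0 k (j : 'I_k) :
  lQ M b0 k *m ecol R k j = lq M b0 j.+1.
Proof.
by rewrite ecol_delta -colE; apply/matrixP => r c; rewrite (ord1 c) !mxE.
Qed.

Lemma QtE (R : rcfType) n (M : 'M[R]_n) b0 k (v : 'cV[R]_n) (i : 'I_k) :
  ((lQ M b0 k)^T *m v) i 0 = ip (lq M b0 i.+1) v.
Proof. by rewrite ipE !mxE; apply: eq_bigr => r _; rewrite !mxE. Qed.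

Lemma QtQ (R : rcfType) n (M : 'M[R]_n) b0 k : OR M b0 k ->
  (lQ M b0 k)^T *m lQ M b0 k = 1%:M.
Proof.
move=> hO; apply/matrixP => i l.
have -> : ((lQ M b0 k)^T *m lQ M b0 k) i l = ip (lq M b0 i.+1) (lq M b0 l.+1).
  by rewrite ipE !mxE; apply: eq_bigr => r _; rewrite !mxE.
by rewrite hO ?ltn_ord // mxE eqSS.
Qed.

Lemma Qt0 (R : rcfType) n (M : 'M[R]_n) b0 k (u : 'cV[R]_n) :
  (forall i, (0 < i <= k)%N -> ip (lq M b0 i) u = 0) -> (lQ M b0 k)^T *m u = 0.
Proof.
move=> h; apply/matrixP => i c; rewrite (ord1 c) QtE h ?mxE //.
by rewrite ltn_ord.
Qed.

Lemma inspan (R : rcfType) n (M : 'M[R]_n) b0 k i : (i <= k)%N ->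
  exists c, lq M b0 i = lQ M b0 k *m c.
Proof.
case: i => [|i] hi; first by exists 0; rewrite mulmx0 lq0.
by exists (ecol R k (Ordinal hi)); rewrite (lQ_e _ _ (Ordinal hi)).
Qed.

Lemma proj_lemma (R : rcfType) n k (Q : 'M[R]_(n, k)) (u v : 'cV[R]_n) c :
  Q^T *m Q = 1%:M -> Q^T *m u = 0 -> v = Q *m c + u -> Q *m (Q^T *m v) + u = v.
Proof.
move=> h1 h2 ->; by rewrite mulmxDr h2 addr0 (mulmxA Q^T) h1 mul1mx.
Qed.

Lemma col_rel (R : rcfType) n (M : 'M[R]_n) b0 k (j : 'I_k) :
  (forall l, (2 <= l <= k)%N -> lbeta M b0 l != 0) ->
  exists c, M *m lq M b0 j.+1 = lQ M b0 k *m c + (j.+1 == k)%:R *: lqhat M b0 k.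
Proof.
move=> hb.
have hj := ltn_ord j.
have [c2 e2] := inspan M b0 hj.
have [c3 e3] := inspan M b0 (ltnW hj).
rewrite Mq_expand // e2 /= e3.
case: eqVneq => [hk|hk].
  exists (lalpha M b0 j.+1 *: c2 + lbeta M b0 j.+1 *: c3).
  have -> : lqhat M b0 k = lqhat M b0 j.+1 by rewrite hk.
  by rewrite scale1r mulmxDr -!scalemxAr [RHS]addrC addrA.
have hj2 : (j.+2 <= k)%N by rewrite ltn_neqAle hk hj.
have [c1 e1] := inspan M b0 hj2.
exists (lbeta M b0 j.+2 *: c1 + lalpha M b0 j.+1 *: c2 + lbeta M b0 j.+1 *: c3).
rewrite scale0r addr0 lqhat_beta //; last by apply: hb; rewrite hj2.
by rewrite e1 !mulmxDr -!scalemxAr.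
Qed.

Lemma E1 (R : rcfType) n (M : 'M[R]_n) b0 k :
  (forall l, (2 <= l <= k.+1)%N -> lbeta M b0 l != 0) -> OR M b0 k.+1 ->
  (forall i, (0 < i <= k.+1)%N -> ip (lq M b0 i) (lqhat M b0 k.+1) = 0) ->
  M *m lQ M b0 k.+1 = lQ M b0 k.+1 *m ((lQ M b0 k.+1)^T *m M *m lQ M b0 k.+1)
     + lqhat M b0 k.+1 *m (ecol R k.+1 k)^T.
Proof.
move=> hb hO hq.
set Q := lQ M b0 k.+1.
suff H : forall j : 'I_k.+1, col j (M *m Q) = col j (Q *m (Q^T *m M *m Q)
     + lqhat M b0 k.+1 *m (ecol R k.+1 k)^T).
  by apply/matrixP => r j; have := congr1 (fun A : 'cV[R]_n => A r 0) (H j); rewrite !mxE.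
move=> j; rewrite !colE -!mulmxA -ecol_delta lQ_e.
rewrite mulmxDl -!mulmxA lQ_e.
have -> : (ecol R k.+1 k)^T *m ecol R k.+1 j = (j.+1 == k.+1)%:R%:M.
  rewrite (@ecol_delta R k.+1 ord_max) ecol_delta trmx_delta mul_delta_mx_cond eqSS.
  have -> : (j == k :> nat) = (ord_max == j).
    by apply/eqP/eqP => [h|<-] //; apply: val_inj; rewrite /= h.
  case: (ord_max == j); last by rewrite mulr0n; apply/matrixP => a b; rewrite !mxE mul0rn.
  by apply/matrixP => a b; rewrite !mxE (ord1 a) (ord1 b).
rewrite mul_mx_scalar.
have [c hc] := col_rel j hb.
apply/esym; apply: (proj_lemma (QtQ hO) _ hc).
by rewrite -scalemxAr Qt0 ?scaler0.
Qed.

Lemma projP_sym (R : rcfType) n m (C : 'M[R]_(n, m)) : (projP C)^T = projP C.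
Proof.
rewrite /projP raddfB /= trmx1 !trmx_mul trmxK trmx_inv trmx_mul trmxK.
by rewrite mulmxA.
Qed.

Lemma M_sym (R : rcfType) n m (A : 'M[R]_n) (C : 'M[R]_(n, m)) : A^T = A ->
  (projP C *m A *m projP C)^T = projP C *m A *m projP C.
Proof. by move=> hA; rewrite !trmx_mul projP_sym hA mulmxA. Qed.

Unset Implicit Arguments.

Theorem proposition3p2 (R : rcfType) (n m k : nat)
  (A : 'M[R]_n) (C : 'M[R]_(n, m)) (b0 : 'cV[R]_n) (gamma : R)
  (hA : A^T = A) (hC : \rank C = m)
  (hb0 : b0 != 0) (hb0C : C^T *m b0 = 0) (hgamma : 0 < gamma)
  (hk : (0 < k)%N)
  (hbeta : forall j : nat, (2 <= j <= k)%N ->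
     lbeta (projP C *m A *m projP C) b0 j != 0)
  (mu : R) (w : 'cV[R]_k) :
  let M := projP C *m A *m projP C in
  let Q := lQ M b0 k in
  let T := Q^T *m M *m Q in
  rQEPmin_minimizer T (gamma ^- 2 * vnorm b0 ^+ 2) mu w ->
  let y := (T - mu%:M) *m w in
  let z := Q *m w in
  let ek := ecol R k k.-1 in
  (M - mu%:M) *m (M - mu%:M) *m z - gamma ^- 2 *: (b0 *m b0^T *m z)
  = lqhat M b0 k *m (ek^T *m y) + (M - mu%:M) *m lqhat M b0 k *m (ek^T *m w).
Proof.
move=> M Q T [[_ hfeas] _] y z ek.
have hM : M^T = M by apply: M_sym.
have {}hbeta : forall j, (2 <= j <= k)%N -> lbeta M b0 j != 0 := hbeta.
clearbody M.
have hv : vnorm b0 != 0 by apply: vnorm_neq0.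
have hO : OR M b0 k := orth hM hb0 hbeta.
have hq : forall i, (0 < i <= k)%N -> ip (lq M b0 i) (lqhat M b0 k) = 0.
  by move=> i /andP[_ hi]; apply: (qhat_orth hM hk hbeta hO hi).
rewrite /y /z /ek /T /Q in hfeas *; clear y z ek T Q.
case: k hk hbeta w hfeas hO hq => [//|k] _ hbeta w hfeas hO hq.
set Q := lQ M b0 k.+1 in hfeas *.
set T := Q^T *m M *m Q in hfeas *.
set ek := ecol R k.+1 k.+1.-1.
have hE1 := E1 hbeta hO hq.
set qh := lqhat M b0 k.+1 in hE1 *.
have K : (M - mu%:M) *m Q = Q *m (T - mu%:M) + qh *m ek^T.
  rewrite mulmxBl hE1 mulmxBr mul_scalar_mx mul_mx_scalar /T /ek /=.
  by rewrite addrAC.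
have Qe0 : Q *m ecol R k.+1 0 = (vnorm b0)^-1 *: b0.
  by rewrite (lQ_e M b0 (@ord0 k)) lq1.
have hQQ : Q^T *m Q = 1%:M := QtQ hO.
have Qtb : b0^T *m Q = vnorm b0 *: (ecol R k.+1 0)^T.
  have eb : b0 = vnorm b0 *: (Q *m ecol R k.+1 0) by rewrite Qe0 scalerA mulfV // scale1r.
  by rewrite {1}eb linearZ /= trmx_mul -scalemxAl -mulmxA hQQ mulmx1.
set X := M - mu%:M in K *.
set S := T - mu%:M in K hfeas *.
clearbody X S.
rewrite -mulmxA (mulmxA X Q w) K mulmxDl mulmxDr.
rewrite -(mulmxA Q) (mulmxA X Q) K mulmxDl.
have L2 : Q *m S *m (S *m w) = (gamma^-2 * vnorm b0) *: (b0 *m ((ecol R k.+1 0)^T *m w)).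
  rewrite -mulmxA (mulmxA S S w) hfeas -scalemxAr -mulmxA.
  rewrite (mulmxA Q) Qe0.
  rewrite -scalemxAl scalerA; congr (_ *: _).
  by rewrite expr2 mulrA mulfK.
have L3 : gamma^-2 *: (b0 *m b0^T *m (Q *m w)) = (gamma^-2 * vnorm b0) *: (b0 *m ((ecol R k.+1 0)^T *m w)).
  by rewrite -mulmxA (mulmxA b0^T) Qtb -scalemxAl -scalemxAr scalerA.
rewrite L2 L3 addrAC (addrAC _ _ (- _)) subrr add0r.
by rewrite !mulmxA.
Qed.
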